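(* For polarization $a$, intensity $\mu>0$ and flag $z$, let $\sigma_{(a,\mu,z)}=\sum_{N=0}^\infty e^{-\mu}\frac{\mu^N}{N!}|N\rangle\langle N|_a$ and $$\xi_{(a,\mu,z)}=\sum_{N=0}^{N_{\mathrm{decoy}}}e^{-\mu}\frac{\mu^N}{N!}|N\rangle\langle N|_a+\Big(1-\sum_{N=0}^{N_{\mathrm{decoy}}}e^{-\mu}\frac{\mu^N}{N!}\Big)|a,\mu\rangle\langle a,\mu|,$$ where $\{|a,\mu\rangle\}_{a,\mu}$ is an orthonormal set orthogonal to the span of all $|N\rangle_a$ with $N\le N_{\mathrm{decoy}}$. Then there is a channel $\Psi_{\mathrm{tag}}$ with $\Psi_{\mathrm{tag}}[\xi_{(a,\mu,z)}]=\sigma_{(a,\mu,z)}$ for all setting choices $(a,\mu,z)$.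
   Context: $|N\rangle_a$ denotes the Fock state of $N$ photons all with polarization $a$ (from a finite set of polarizations); the set of intensities is finite; $N_{\mathrm{decoy}}\in\mathbb N$. *)

(* Defs.v *)
From HB Require Import structures.
From mathcomp Require Import all_boot all_order all_algebra.
From mathcomp Require Import complex.
From mathcomp Require Import all_classical all_reals all_analysis.

Set Implicit Arguments.
Unset Strict Implicit.
Unset Printing Implicit Defensive.
Import Order.TTheory GRing.Theory Num.Theory.
Local Open Scope classical_set_scope.
Local Open Scope ring_scope.
Local Open Scope complex_scope.

Section Defs.
Variable R : realType.
Local Notation C := (R[i]).

Definition rsummable (T : choiceType) (f : T -> R) : Prop :=
  summable [set: T] (fun t => (f t)%:E).

Definition rsum (T : choiceType) (f : T -> R) : R :=
  fine (\esum_(t in [set: T]) (Num.max (f t) 0)%:E)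
  - fine (\esum_(t in [set: T]) (Num.max (- f t) 0)%:E).

Definition csummable (T : choiceType) (f : T -> C) : Prop :=
  rsummable (fun t => complex.Re (f t)) /\ rsummable (fun t => complex.Im (f t)).

Definition csum (T : choiceType) (f : T -> C) : C :=
  Complex (rsum (fun t => complex.Re (f t))) (rsum (fun t => complex.Im (f t))).

(* Output: two-mode (H/V) Fock space, basis |n_H, n_V>. *)
Definition Out := (nat * nat)%type.

(* Input: the Fock space plus extra orthonormal vectors |a,mu>, indexed by
   (polarization, intensity), orthogonal to the whole Fock space. *)
Definition In (A M : finType) := (Out + (A * M))%type.

(* Operators are given by their matrix entries <x| rho |y>. *)

(* A polarization is a Jones vector (alpha, beta) in C^2; the N-photon Fock
   state of that polarization is
   |N>_a = (alpha a_H^dag + beta a_V^dag)^N / sqrt(N!) |vac>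
         = sum_k sqrt(C(N,k)) alpha^k beta^(N-k) |k, N-k>.
   fock_coef p N x = <x | N>_p. *)
Definition fock_coef (p : C * C) (N : nat) (x : Out) : C :=
  if (x.1 + x.2)%N == N then
    (Num.sqrt ('C(N, x.1))%:R : R)%:C * p.1 ^+ x.1 * p.2 ^+ x.2
  else 0.

Definition fock_proj (p : C * C) (N : nat) (x y : Out) : C :=
  fock_coef p N x * conjc (fock_coef p N y).

Definition poisson (mu : R) (N : nat) : R :=
  expR (- mu) * mu ^+ N / (N`!)%:R.

(* sigma_(a,mu) = sum_{N >= 0} poisson mu N |N><N|_a.  Entrywise, the term N
   vanishes unless N = x.1 + x.2, so the series reduces to the finite sum
   below (all omitted terms are 0). *)
Definition sigma_state (p : C * C) (mu : R) (x y : Out) : C :=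
  \sum_(N < (x.1 + x.2).+1) (poisson mu N)%:C * fock_proj p N x y.

Definition xi_state (A M : finType) (pol : A -> C * C) (mu : M -> R)
    (Nd : nat) (a : A) (m : M) (u v : In A M) : C :=
  match u, v with
  | inl x, inl y =>
      \sum_(N < Nd.+1) (poisson (mu m) N)%:C * fock_proj (pol a) N x y
  | inr b, inr c =>
      if (b == (a, m)) && (c == (a, m)) then
        (1 - \sum_(N < Nd.+1) poisson (mu m) N)%:C
      else 0
  | _, _ => 0
  end.

(* A (countable) Kraus family K_k : In -> Out, given by matrix entries
   K k x u = <x| K_k |u>. It defines a quantum channel (CPTP map) iff
   sum_k K_k^dag K_k = Id, i.e. for all basis vectors u, v of the input,
   sum_{k, x} conj(<x|K_k|u>) <x|K_k|v> = delta_{u v}. *)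
Definition kraus_TP (I T : choiceType) (K : nat -> T -> I -> C) : Prop :=
  forall u v : I,
    csummable (fun kx : nat * T => conjc (K kx.1 kx.2 u) * K kx.1 kx.2 v) /\
    csum (fun kx : nat * T => conjc (K kx.1 kx.2 u) * K kx.1 kx.2 v)
      = (u == v)%:R.

(* Summand of <x| Psi[rho] |y> = sum_k sum_{u,v} <x|K_k|u> <u|rho|v> conj(<y|K_k|v>) *)
Definition kraus_term (I T : choiceType) (K : nat -> T -> I -> C)
    (rho : I -> I -> C) (x y : T) (kuv : nat * I * I) : C :=
  K kuv.1.1 x kuv.1.2 * rho kuv.1.2 kuv.2 * conjc (K kuv.1.1 y kuv.2).

Definition kraus_apply (I T : choiceType) (K : nat -> T -> I -> C)
    (rho : I -> I -> C) (x y : T) : C :=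
  csum (kraus_term K rho x y).

End Defs.

(* Main.v *)
Require Import Defs.
From HB Require Import structures.
From mathcomp Require Import all_boot all_order all_algebra.
From mathcomp Require Import complex.
From mathcomp Require Import all_classical all_reals all_analysis.
Import Order.TTheory GRing.Theory Num.Theory.
Local Open Scope ring_scope.
From mathcomp Require Import ring.

Module Aux.
Import numFieldNormedType.Exports.
Local Open Scope ring_scope.
Local Open Scope classical_set_scope.
Local Open Scope complex_scope.

Section Helpers.
Variable R : realType.
Local Notation C := (R[i]).

Lemma sum_complex (T : Type) (s : seq T) (f : T -> C) :
  \sum_(t <- s) f t = Complex (\sum_(t <- s) complex.Re (f t)) (\sum_(t <- s) complex.Im (f t)).
Proof.
elim: s => [|a s IH]; first by rewrite !big_nil.
rewrite !big_cons IH; case: (f a) => x y; reflexivity.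
Qed.

Lemma E1 (T : choiceType) (g : T -> R) (s : seq T) :
  uniq s -> (forall t, t \notin s -> g t = 0) -> (forall t, 0 <= g t) ->
  (\esum_(t in [set: T]) (g t)%:E = (\sum_(t <- s) g t)%:E)%E.
Proof.
move=> us g0 gge.
transitivity (\esum_(t in [set` s]) (g t)%:E)%E.
  rewrite [RHS]esum_mkcond; apply: eq_esum => t _.
  case: ifPn => // /negP; rewrite inE /= => /negP /g0 ->; done.
rewrite esum_fset; last 2 first.
- exact: finite_seq.
- by move=> i _; rewrite lee_fin.
by rewrite -fsbig_seq // sumEFin.
Qed.


Lemma maxr_decomp (x : R) : Num.max x 0 - Num.max (-x) 0 = x.
Proof.
have [h|h] := leP 0 x.
  have -> : Num.max (-x) 0 = 0 by apply/max_idPr; rewrite oppr_le0.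
  by rewrite subr0.
have -> : Num.max (-x) 0 = -x by apply/max_idPl; rewrite oppr_ge0 ltW.
by rewrite sub0r opprK.
Qed.

Lemma max0_ge0 (x : R) : 0 <= Num.max x 0.
Proof. by rewrite le_max lexx orbT. Qed.

Lemma G1r (T : choiceType) (g : T -> R) (s : seq T) :
  uniq s -> (forall t, t \notin s -> g t = 0) ->
  rsummable g /\ rsum g = \sum_(t <- s) g t.
Proof.
move=> us g0; split.
  rewrite /rsummable /summable.
  under eq_esum do rewrite abse_EFin.
  rewrite (@E1 _ (fun t => `|g t|) s us) ?ltry // => t.
  by move=> /g0 ->; rewrite normr0.
rewrite /rsum (@E1 _ (fun t => Num.max (g t) 0) s us); last 2 first.
- by move=> t /g0 ->; rewrite maxxx.
- by move=> t; apply: max0_ge0.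
rewrite (@E1 _ (fun t => Num.max (- g t) 0) s us); last 2 first.
- by move=> t /g0 ->; rewrite oppr0 maxxx.
- by move=> t; apply: max0_ge0.
rewrite /= -sumrB; apply: eq_bigr => t _; exact: maxr_decomp.
Qed.

Lemma G1 (T : choiceType) (f : T -> C) (s : seq T) :
  uniq s -> (forall t, t \notin s -> f t = 0) ->
  csummable f /\ csum f = \sum_(t <- s) f t.
Proof.
move=> us f0.
have [h1 e1] := @G1r _ (fun t => complex.Re (f t)) s us
  (fun t ht => ltac:(by rewrite /= f0)).
have [h2 e2] := @G1r _ (fun t => complex.Im (f t)) s us
  (fun t ht => ltac:(by rewrite /= f0)).
split; first by split.
by rewrite /csum e1 e2 sum_complex.
Qed.

Lemma G3 (T : choiceType) (f : T -> C) (r : T -> R) (v : R) :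
  (forall t, f t = (r t)%:C) -> (forall t, 0 <= r t) ->
  (\esum_(t in [set: T]) (r t)%:E = v%:E)%E ->
  csummable f /\ csum f = v%:C.
Proof.
move=> fr r0 ev.
have hIm : forall t, complex.Im (f t) = 0 by move=> t; rewrite fr.
have hRe : forall t, complex.Re (f t) = r t by move=> t; rewrite fr.
have [hI eI] := @G1r _ (fun t => complex.Im (f t)) [::] erefl
  (fun t _ => hIm t).
split; last first.
  rewrite /csum eI big_nil /rsum.
  under eq_esum do rewrite hRe.
  under [X in _ - fine X]eq_esum do rewrite hRe.
  have -> : (\esum_(i in [set: T]) (Num.max (r i) 0)%:E)%E = v%:E.
    by rewrite -ev; apply: eq_esum => t _; congr (_%:E); apply/max_idPl.
  have -> : (\esum_(i in [set: T]) (Num.max (- r i) 0)%:E)%E = 0%E.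
    apply: esum1 => t _; congr (_%:E); apply/max_idPr.
    by rewrite oppr_le0.
  by rewrite /= subr0.
split => //.
rewrite /rsummable /summable.
under eq_esum do rewrite hRe abse_EFin ger0_norm //.
by rewrite ev ltry.
Qed.

End Helpers.

Section Series.
Variable R : realType.
Variable Nd : nat.

Definition Psum (mu : R) (n : nat) := \sum_(0 <= N < n) poisson mu N.
Definition Sp (mu : R) := \sum_(N < Nd.+1) poisson mu N.

Lemma poisson_ge0 (mu : R) N : 0 < mu -> 0 <= poisson mu N.
Proof.
move=> h; rewrite /poisson; apply: divr_ge0; last by rewrite ler0n.
by apply: mulr_ge0; [exact: expR_ge0 | apply: exprn_ge0; exact: ltW].
Qed.

Lemma poisson_gt0 (mu : R) N : 0 < mu -> 0 < poisson mu N.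
Proof.
move=> h; rewrite /poisson; apply: divr_gt0; last by rewrite ltr0n fact_gt0.
by apply: mulr_gt0; [exact: expR_gt0 | apply: exprn_gt0].
Qed.

Lemma Psum_cvg (mu : R) : Psum mu n @[n --> \oo] --> (1 : R).
Proof.
have e : Psum mu = fun n => expR (- mu) * series (exp_coeff mu) n.
  apply/funext => n; rewrite /Psum /series /= mulr_sumr; apply: eq_bigr => i _.
  by rewrite /poisson /exp_coeff /= mulrA.
rewrite e.
have -> : (1 : R) = expR (- mu) * expR mu by rewrite expRN mulVf // gt_eqF // expR_gt0.
apply: cvgMl_tmp.
exact: (is_cvg_series_exp_coeff mu).
Qed.


Lemma Psum_ndecr (mu : R) : 0 < mu ->
  {homo Psum mu : n m / (n <= m)%N >-> n <= m}.
Proof.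
move=> h n m nm; rewrite /Psum (big_cat_nat (leq0n n) nm) /= lerDl.
by apply: sumr_ge0 => i _; exact: poisson_ge0.
Qed.

Lemma Psum_le1 (mu : R) n : 0 < mu -> Psum mu n <= 1.
Proof.
move=> h; have := nondecreasing_cvgn_le (@Psum_ndecr mu h) (cvgP _ (Psum_cvg mu)) n.
by rewrite (cvg_lim _ (Psum_cvg mu)).
Qed.

Lemma Sp_lt1 (mu : R) : 0 < mu -> Sp mu < 1.
Proof.
move=> h; apply: (@lt_le_trans _ _ (Psum mu Nd.+2)); last exact: Psum_le1.
rewrite /Psum big_nat_recr //= /Sp big_mkord ltrDl; exact: poisson_gt0.
Qed.

Definition wt (mu : R) (N : nat) : R :=
  if (Nd < N)%N then Num.sqrt (poisson mu N / (1 - Sp mu)) else 0.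

Lemma wt_sqr (mu : R) N : 0 < mu ->
  wt mu N ^+ 2 = if (Nd < N)%N then poisson mu N / (1 - Sp mu) else 0.
Proof.
move=> h; rewrite /wt; case: ifP => _; last by rewrite expr0n.
rewrite sqr_sqrtr //; apply: divr_ge0; first exact: poisson_ge0.
by rewrite subr_ge0 ltW // Sp_lt1.
Qed.

Lemma wt_series (mu : R) : 0 < mu ->
  (\sum_(N <oo) ((wt mu N) ^+ 2)%:E = 1%:E)%E.
Proof.
move=> h.
have S1 : 1 - Sp mu != 0 by rewrite subr_eq0 eq_sym lt_eqF // Sp_lt1.
pose s n := \sum_(0 <= N < n) (wt mu N) ^+ 2.
have -> : (fun n => \sum_(0 <= N < n) ((wt mu N) ^+ 2)%:E)%E = EFin \o s.
  by apply/funext => n; rewrite /= sumEFin.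
have cs : s n @[n --> \oo] --> (1 : R).
  have c2 : (Psum mu n - Sp mu) * (1 - Sp mu)^-1 @[n --> \oo] --> (1 : R).
    rewrite -[X in _ --> X](mulfV S1).
    apply: cvgMr_tmp; apply: cvgB; first exact: Psum_cvg.
    exact: cvg_cst.
  apply: cvg_trans c2.
  apply: near_eq_cvg; near=> n.
  have hn : (Nd.+1 <= n)%N by near: n; exists Nd.+1.
  suff -> : s n = (Psum mu n - Sp mu) * (1 - Sp mu)^-1 by [].
  rewrite /s /Psum (big_cat_nat (leq0n _) hn) /= [X in X + _]big_nat_cond big1; last first.
    by move=> i /andP[/andP[_ hi] _]; rewrite wt_sqr // ltnNge -ltnS hi.
  rewrite add0r (big_cat_nat (leq0n _) hn) /= /Sp big_mkord addrC addrK.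
  rewrite mulr_suml big_nat_cond [RHS]big_nat_cond; apply: eq_bigr => i /andP[/andP[hi _] _].
  by rewrite wt_sqr // hi.
rewrite EFin_lim; last exact: cvgP cs.
by rewrite (cvg_lim _ cs).
Unshelve. all: by end_near.
Qed.

End Series.

Section Fock.
Variable R : realType.
Local Notation C := (R[i]).

Lemma sum_single (m n : nat) (F : nat -> C) :
  (forall N, N != n -> F N = 0) ->
  \sum_(N < m) F N = if (n < m)%N then F n else 0.
Proof.
move=> F0; case: ifP => h.
  rewrite (bigD1 (Ordinal h)) //= big1 ?addr0 // => i hi; apply: F0.
  apply: contra hi => /eqP e; apply/eqP; exact: val_inj.
apply: big1 => i _; apply: F0; apply/eqP => e; move: (ltn_ord i).
by rewrite e h.
Qed.

Lemma fc0 (p : C * C) N (x : Out) : (x.1 + x.2 != N)%N -> fock_coef p N x = 0.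
Proof. by rewrite /fock_coef => /negPf ->. Qed.

Lemma cz (z : C) : conjc z * z = ((complex.Re z) ^+ 2 + (complex.Im z) ^+ 2)%:C.
Proof. case: z => a b; simpc; rewrite /= !expr2 [b * a]mulrC subrr; reflexivity. Qed.

Lemma fc_sum (p : C * C) (hp : p.1 * conjc p.1 + p.2 * conjc p.2 = 1) N :
  \sum_(j < N.+1) conjc (fock_coef p N (nat_of_ord j, N - j)%N) * fock_coef p N (nat_of_ord j, N - j)%N = 1.
Proof.
have e1 : conjc p.2 * p.2 + conjc p.1 * p.1 = 1.
  by rewrite addrC mulrC [conjc p.2 * _]mulrC.
rewrite -(expr1n _ N) -e1 exprDn; apply: eq_bigr => j _.
have hj : (j <= N)%N by rewrite -ltnS.
rewrite /fock_coef /= subnKC // eqxx.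
set s := Num.sqrt _.
have es : (s%:C * s%:C) = ('C(N, j))%:R.
  rewrite -rmorphM /= /s -expr2 sqr_sqrtr ?ler0n //.
  by rewrite rmorph_nat.
rewrite !rmorphM /= !rmorphXn /= oppr0 complexr0.
transitivity ((s%:C * s%:C) * ((conjc p.2 * p.2) ^+ (N - j) * (conjc p.1 * p.1) ^+ j)).
  rewrite !exprMn; ring.
by rewrite es mulr_natl.
Qed.

End Fock.

Section Kraus.
Variable R : realType.
Local Notation C := (R[i]).
Variables (A M : finType) (pol : A -> C * C) (mu : M -> R) (Nd : nat).

Definition cc := #|{: A * M}|.
Definition code (b : A * M) (N : nat) : nat := (N * cc + enum_rank b).+1.

Definition Kop (k : nat) (x : Out) (u : In A M) : C :=
  match u with
  | inl y => if k == 0%N then (x == y)%:R else 0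
  | inr b => if (k != 0%N) && (k.-1 %% cc == enum_rank b)%N then
       (@wt R Nd (mu b.2) (k.-1 %/ cc))%:C * fock_coef (pol b.1) (k.-1 %/ cc) x
     else 0
  end.

Lemma cc_gt0 (b : A * M) : (0 < cc)%N.
Proof. exact: leq_ltn_trans (leq0n _) (ltn_ord (enum_rank b)). Qed.

Lemma code_mod b N : ((code b N).-1 %% cc = enum_rank b)%N.
Proof. by rewrite /code /= modnMDl modn_small. Qed.

Lemma code_div b N : ((code b N).-1 %/ cc = N)%N.
Proof. by rewrite /code /= divnMDl ?(cc_gt0 b) // divn_small ?addn0. Qed.

Lemma code_inj b : injective (code b).
Proof. by move=> N N' e; rewrite -(code_div b N) -(code_div b N') e. Qed.

Lemma code_neq0 b N : code b N != 0%N.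
Proof. by []. Qed.

Lemma codeP b k : k != 0%N -> (k.-1 %% cc == enum_rank b)%N ->
  k = code b (k.-1 %/ cc).
Proof.
move=> k0 /eqP e; rewrite /code -e -divn_eq prednK //.
by rewrite lt0n.
Qed.


Lemma conjcRM (r : R) (z : C) : conjc (r%:C * z) = r%:C * conjc z.
Proof. by rewrite rmorphM /= oppr0 complexr0. Qed.

Lemma G1v (T : choiceType) (f : T -> C) (s : seq T) (v : C) :
  uniq s -> (forall t, t \notin s -> f t = 0) -> \sum_(t <- s) f t = v ->
  csummable f /\ csum f = v.
Proof. by move=> us f0 <-; exact: G1. Qed.

Lemma cj0 : Complex (0:R) (- 0) = 0.
Proof. by rewrite oppr0. Qed.

Definition nsq (z : C) : R := (complex.Re z) ^+ 2 + (complex.Im z) ^+ 2.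

Lemma nsq_ge0 z : 0 <= nsq z.
Proof. by rewrite /nsq addr_ge0 // sqr_ge0. Qed.

Lemma nsq0 : nsq 0 = 0.
Proof. by rewrite /nsq /= expr0n /= addr0. Qed.

Definition outs (N : nat) : seq Out := [seq (j, N - j)%N | j <- iota 0 N.+1].

Lemma outs_uniq N : uniq (outs N).
Proof.
rewrite /outs map_inj_uniq ?iota_uniq // => j j' [] //.
Qed.

Lemma outs_notin N (x : Out) : x \notin outs N -> (x.1 + x.2 != N)%N.
Proof.
apply: contra => /eqP e; apply/mapP; exists x.1.
  by rewrite mem_iota /= add0n ltnS -e leq_addr.
by case: x e => a b /= <-; rewrite addKn.
Qed.

Lemma sum_outs (F : Out -> C) N :
  \sum_(x <- outs N) F x = \sum_(j < N.+1) F (nat_of_ord j, N - j)%N.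
Proof. by rewrite /outs big_map -(big_mkord xpredT (fun j => F (j, N - j)%N)). Qed.


Lemma inner_sum (b : A * M) k :
  (pol b.1).1 * conjc (pol b.1).1 + (pol b.1).2 * conjc (pol b.1).2 = 1 ->
  (\esum_(x in [set: Out]) (nsq (Kop k x (inr b)))%:E =
   (if (k != 0%N) && (k.-1 %% cc == enum_rank b)%N
    then (@wt R Nd (mu b.2) (k.-1 %/ cc)) ^+ 2 else 0)%:E)%E.
Proof.
move=> hp; rewrite /Kop; case: ifP => hc; last first.
  by apply: esum1 => x _; rewrite nsq0.
set N := (k.-1 %/ cc)%N; set w := @wt R Nd (mu b.2) N.
rewrite (@E1 _ _ (fun x => nsq (w%:C * fock_coef (pol b.1) N x)) (outs N)).
- congr (_%:E).
  have e : forall z : C, nsq z = complex.Re (conjc z * z) by move=> z; rewrite cz.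
  under eq_bigr do rewrite e.
  have := congr1 (@complex.Re R) (@sum_complex R _ (outs N)
     (fun x => conjc (w%:C * fock_coef (pol b.1) N x) * (w%:C * fock_coef (pol b.1) N x))).
  move=> /= <-.
  rewrite sum_outs.
  under eq_bigr do rewrite rmorphM /= oppr0 complexr0 mulrACA -rmorphM /=.
  by rewrite -mulr_sumr fc_sum //= mulr1 mul0r subr0 expr2.
- exact: outs_uniq.
- by move=> x /outs_notin /(@fc0 R (pol b.1)) ->; rewrite mulr0 nsq0.
- by move=> x; exact: nsq_ge0.
Qed.


Lemma TP_diag (b : A * M) :
  (pol b.1).1 * conjc (pol b.1).1 + (pol b.1).2 * conjc (pol b.1).2 = 1 ->
  0 < mu b.2 ->
  csummable (fun kx : nat * Out => conjc (Kop kx.1 kx.2 (inr b)) * Kop kx.1 kx.2 (inr b))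
  /\ csum (fun kx : nat * Out => conjc (Kop kx.1 kx.2 (inr b)) * Kop kx.1 kx.2 (inr b))
     = (1 : R)%:C.
Proof.
move=> hp hmu.
apply: (@G3 R _ _ (fun kx => nsq (Kop kx.1 kx.2 (inr b)))).
- by move=> t; rewrite cz.
- by move=> t; exact: nsq_ge0.
have eT : [set: nat] `*`` (fun _ => [set: Out]) = [set: nat * Out].
  by apply/seteqP; split.
transitivity (\esum_(kx in [set: nat] `*`` (fun _ => [set: Out]))
   (nsq (Kop kx.1 kx.2 (inr b)))%:E)%E; first by rewrite eT.
rewrite -(esum_esum (a := fun k x => (nsq (Kop k x (inr b)))%:E)); last first.
  by move=> *; rewrite lee_fin nsq_ge0.
under eq_esum do rewrite inner_sum //.
transitivity (\esum_(k in range (code b))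
   (if (k != 0%N) && (k.-1 %% cc == enum_rank b)%N
    then (@wt R Nd (mu b.2) (k.-1 %/ cc)) ^+ 2 else 0)%:E)%E.
  rewrite [RHS]esum_mkcond; apply: eq_esum => k _.
  have [hk|hk] := boolP (k \in range (code b)); first by [].
  have [hc|hc] := boolP ((k != 0%N) && (k.-1 %% cc == enum_rank b)%N); last by [].
  case/andP: hc => h1 h2; case/negP: hk; apply/mem_set.
  by exists (k.-1 %/ cc)%N => //; rewrite -codeP.
rewrite esum_image; last by move=> ? ? _ _; apply: code_inj.
under eq_esum do rewrite code_neq0 code_mod eqxx code_div /=.
rewrite -nneseries_esumT; first exact: wt_series.
by move=> n; rewrite lee_fin sqr_ge0.
Qed.


Lemma Kop_TP :
  (forall a, (pol a).1 * conjc (pol a).1 + (pol a).2 * conjc (pol a).2 = 1) ->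
  (forall m, 0 < mu m) -> kraus_TP Kop.
Proof.
move=> hp hmu [y|b] [y'|b'].
- apply: (@G1v _ _ [:: (0%N, y)]) => //.
    move=> [k x]; rewrite mem_seq1 /= => hne.
    have [k0|k0] := eqVneq k 0%N; last by rewrite /Kop /= ?(negPf k0) ?rmorph0 ?cj0 ?mul0r ?mulr0.
    subst k; have [exy|nxy] := eqVneq x y; first by rewrite exy eqxx in hne.
    by rewrite /Kop /= ?(negPf nxy) ?rmorph0 ?cj0 ?mul0r ?mulr0.
  by rewrite big_seq1 /= eqxx rmorph1 mul1r.
- apply: (@G1v _ _ ([::] : seq (nat * Out))) => //; last by rewrite big_nil.
  move=> [k x] _; have [->|k0] := eqVneq k 0%N; first by rewrite /= ?mulr0.
  by rewrite /Kop /= ?(negPf k0) ?rmorph0 ?cj0 ?mul0r ?mulr0.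
- apply: (@G1v _ _ ([::] : seq (nat * Out))) => //; last by rewrite big_nil.
  move=> [k x] _; have [->|k0] := eqVneq k 0%N; first by rewrite /= ?rmorph0 ?cj0 ?mul0r.
  by rewrite /Kop /= ?(negPf k0) ?rmorph0 ?cj0 ?mul0r ?mulr0.
have [<-|nb] := eqVneq b b'.
  by rewrite eqxx; exact: TP_diag.
apply: (@G1v _ _ ([::] : seq (nat * Out))) => //; last by rewrite big_nil; case: eqP => // -[] /eqP; rewrite (negPf nb).
move=> [k x] _ /=.
case: ifP => hc; last by rewrite ?rmorph0 ?cj0 mul0r.
case: ifP => hc'; last by rewrite mulr0.
case/andP: hc => _ /eqP e; case/andP: hc' => _ /eqP e'.
by case/eqP: nb; apply: enum_rank_inj; apply: val_inj; rewrite /= -e -e'.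
Qed.


Lemma Kop_apply (a : A) (m : M) (x y : Out) :
  (forall a, (pol a).1 * conjc (pol a).1 + (pol a).2 * conjc (pol a).2 = 1) ->
  (forall m, 0 < mu m) ->
  csummable (kraus_term Kop (xi_state pol mu Nd a m) x y) /\
  kraus_apply Kop (xi_state pol mu Nd a m) x y = sigma_state (pol a) (mu m) x y.
Proof.
move=> hp hmu.
set n := (x.1 + x.2)%N.
apply: (@G1v _ _ [:: (0%N, inl x, inl y); (code (a, m) n, inr (a, m), inr (a, m))]).
- by [].
- move=> [[k u] v]; rewrite !inE negb_or => /andP[h1 h2].
  rewrite /kraus_term /=.
  case: u v h1 h2 => [x'|b] [y'|b'] h1 h2 /=.
  + case: ifP => /eqP k0; last by rewrite !mul0r.
    subst k.
    case: eqP => [ex|nx]; last by rewrite !mul0r.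
    case: eqP => [ey|ny]; last by rewrite ?rmorph0 ?cj0 mulr0.
    by subst x' y'; rewrite eqxx in h1.
  + by rewrite mulr0 mul0r.
  + by rewrite mulr0 mul0r.
  + have [eb|nb] := eqVneq b (a, m); last by rewrite /= mulr0 mul0r.
    have [eb'|nb'] := eqVneq b' (a, m); last by rewrite /= mulr0 mul0r.
    subst b b'.
    case: ifP => hc; last by rewrite !mul0r.
    have [eN|nN] := eqVneq (k.-1 %/ cc)%N n; last first.
      by rewrite (@fc0 R _ (k.-1 %/ cc)%N x) ?mulr0 ?mul0r // eq_sym.
    case/andP: hc => hk0 hk; have ek := codeP (a, m) k hk0 hk.
    by rewrite eN in ek; subst k; rewrite eqxx in h2.
rewrite big_cons big_seq1 /kraus_term /=.
have hm := code_mod (a, m) n; have hd := code_div (a, m) n.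
rewrite /code /= in hm hd; rewrite hm hd !eqxx /= ?mulr1n oppr0 complexr0 mul1r mulr1.
set F := fun N => (poisson (mu m) N)%:C * fock_proj (pol a) N x y.
have F0 : forall N, N != n -> F N = 0.
  by move=> N hN; rewrite /F /fock_proj fc0 ?mul0r ?mulr0 // eq_sym.
rewrite /sigma_state -/n (@sum_single R Nd.+1 n F F0) (@sum_single R n.+1 n F F0) ltnSn.
rewrite conjcRM.
set w := @wt R Nd (mu m) n.
have e2 : w%:C * fock_coef (pol a) n x * (1 - \sum_(N < Nd.+1) poisson (mu m) N)%:C *
   (w%:C * conjc (fock_coef (pol a) n y))
   = (w%:C * w%:C * (1 - \sum_(N < Nd.+1) poisson (mu m) N)%:C) * fock_proj (pol a) n x y.
  by rewrite /fock_proj; ring.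
rewrite e2.
have S1 : 1 - @Sp R Nd (mu m) != 0 by rewrite subr_eq0 eq_sym lt_eqF // Sp_lt1.
have [hn|hn] := ltnP Nd n.
  rewrite ltnS leqNgt hn /= add0r.
  have hw : w%:C * w%:C * (1 - \sum_(N < Nd.+1) poisson (mu m) N)%:C = (poisson (mu m) n)%:C.
    by rewrite -!rmorphM /= -expr2 /w wt_sqr // hn divfK.
  by rewrite hw.
rewrite ltnS hn /w /wt ltnNge hn /=.
by rewrite !mul0r addr0.
Qed.

End Kraus.

End Aux.
Import Aux.

Theorem mainTheorem11 (R : realType) (A M : finType)
    (pol : A -> R[i] * R[i])
    (pol_unit : forall a, (pol a).1 * conjc (pol a).1 + (pol a).2 * conjc (pol a).2 = 1)
    (mu : M -> R) (mu_pos : forall m, 0 < mu m) (mu_inj : injective mu)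
    (Ndecoy : nat) :
  exists K : nat -> Out -> In A M -> R[i],
    kraus_TP K /\
    forall (a : A) (m : M) (x y : Out),
      csummable (kraus_term K (xi_state pol mu Ndecoy a m) x y) /\
      kraus_apply K (xi_state pol mu Ndecoy a m) x y = sigma_state (pol a) (mu m) x y.
Proof.
exists (@Kop R A M pol mu Ndecoy); split.
  exact: Kop_TP.
by move=> a m x y; exact: Kop_apply.
Qed.
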